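(* For each integer $k\geq2$ let $O_k=\langle x,e\mid x^k=x^{k-1}e=0,\ ex=x,\ e^2=e\rangle$. Then: (i) for each $k\geq2$, the pseudovariety $\llbracket O_k^{\mathsf{bar}}\rrbracket$ is join irreducible and \[\operatorname{Excl}(O_k^{\mathsf{bar}})=\llbracket(\mathbf{e}c(a^\omega b)^{k-1})^\omega\approx(\mathbf{e}c((a^\omega b)^{k-1})^{\omega+1})^\omega\rrbracket,\] where $\mathbf{e}$ is an idempotent in the minimal ideal of $\widehat{\{a,b,c\}^+}$; (ii) the pseudovarieties $\llbracket O_2^{\mathsf{bar}}\rrbracket,\llbracket O_3^{\mathsf{bar}}\rrbracket,\llbracket O_4^{\mathsf{bar}}\rrbracket,\dots$ are pairwise distinct.
   Context: All semigroups are finite (here $O_k$ is the finite semigroup given by the presentation, with $0$ a zero element). A pseudovariety is a class of finite semigroups closed under finite direct products, subsemigroups and homomorphic images; $\llbracket S\rrbracket$ is the pseudovariety generated by $S$ and $\llbracket\Sigma\rrbracket$ the pseudovariety defined by pseudoidentities $\Sigma$. $\widehat{A^+}$ is the free profinite semigroup on $A$ and $\mathbf{x}^\omega$ the idempotent power, $\mathbf{x}^{\omega+1}=\mathbf{x}^\omega\mathbf{x}$. A pseudovariety $\mathbf{V}$ is join irreducible if for every set $\mathscr{X}$ of pseudovarieties, $\mathbf{V}\subseteq\bigvee\mathscr{X}$ implies $\mathbf{V}\subseteq\mathbf{X}$ for some $\mathbf{X}\in\mathscr{X}$. $\operatorname{Excl}(S)$ is the class of finite semigroups $T$ with $S\notin\llbracket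 T\rrbracket$. For a semigroup $S$, $S^\bullet=S$ if $S$ is a monoid and $S^\bullet=S^I$ (external identity adjoined) otherwise; $S^{\mathsf{bar}}$ is the semigroup of transformations of $S^\bullet$ (acting on the right) consisting of right multiplications by elements of $S$ together with all constant maps on $S^\bullet$. *)

(* Defs.v *)
From HB Require Import structures.
From mathcomp Require Import all_boot.
From mathcomp Require Import zify.
Set Implicit Arguments. Unset Strict Implicit. Unset Printing Implicit Defensive.

Record fsg := FSG {
  fcar :> finType;
  fmul : fcar -> fcar -> fcar;
  fmulA : associative fmul;
  fne : 0 < #|fcar| }.
Arguments fmul : clear implicits.

Definition is_hom (S T : fsg) (h : S -> T) : Prop :=
  forall x y, h (fmul S x y) = fmul T (h x) (h y).

Definition fprod_mul (S T : fsg) (x y : (S * T)%type) : (S * T)%type :=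
  (fmul S x.1 y.1, fmul T x.2 y.2).

Lemma fprod_mulA (S T : fsg) : associative (@fprod_mul S T).
Proof. by move=> x y z; rewrite /fprod_mul /= !fmulA. Qed.

Lemma fprod_ne (S T : fsg) : 0 < #|{: (S * T)%type}|.
Proof. by rewrite card_prod muln_gt0 !fne. Qed.

Definition fprod (S T : fsg) : fsg := FSG (@fprod_mulA S T) (fprod_ne S T).

(* ---------- the semigroup O_k = <x,e | x^k = x^(k-1)e = 0, ex = x, e^2 = e> ----------
   Normal forms: x^i e^b (b : bool), encoded as (i,b), with (0,true) = e,
   (i,false) = x^i (1 <= i <= k-1), (i,true) = x^i e (1 <= i <= k-2),
   and the zero 0 encoded as None. *)
Definition okv (k : nat) (p : nat * bool) : bool :=
  (p.1 < k) && (if p.1 == 0 then p.2 else p.2 ==> (p.1.+2 <= k)).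

(* product of words x^i e^b . x^j e^c = x^(i+j) e^(c || (b && j == 0)) *)
Definition rmul (k : nat) (x y : option (nat * bool)) : option (nat * bool) :=
  match x, y with
  | Some (i, b), Some (j, c) =>
      let r := (i + j, c || (b && (j == 0))) in if okv k r then Some r else None
  | _, _ => None
  end.

Definition rvalid k (x : option (nat * bool)) : bool :=
  if x is Some p then okv k p else true.

Lemma rmul_valid k x y : rvalid k (rmul k x y).
Proof.
case: x => [[i b]|]; case: y => [[j c]|] //=.
by case: ifP.
Qed.

Lemma okvE k n (f : bool) :
  okv k (n, f) = [&& n < k, (~~ f) || (n == 0) || (n.+2 <= k) & f || (n != 0)].
Proof. by rewrite /okv /=; case: f; case: n => [|n] /=; rewrite ?andbT. Qed.

Lemma rmulA k x y z : rvalid k x -> rvalid k y -> rvalid k z ->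
  rmul k (rmul k x y) z = rmul k x (rmul k y z).
Proof.
case: x => [[i b]|]; case: y => [[j c]|]; case: z => [[l d]|] //=;
  try by case: ifP.
move=> Hx Hy Hz.
case: b Hx; case: c Hy; case: d Hz => /= Hz Hy Hx;
do ! (case: ifP => /=); rewrite ?addnA //.
all: move=> *; repeat match goal with
  | H : is_true (okv _ _) |- _ => rewrite okvE in H
  | H : okv _ _ = false |- _ => rewrite okvE in H end.
all: try lia.
all: try (congr (Some (_, _)); lia).
Qed.

Definition ocpred (k : nat) (p : ('I_k * bool)%type) : bool := okv k (val p.1, p.2).
Definition Ocar (k : nat) : finType := option {p : ('I_k * bool)%type | ocpred p}.

Definition toraw k (x : Ocar k) : option (nat * bool) :=
  omap (fun s => (val (val s).1, (val s).2)) x.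

Definition fromraw k (r : option (nat * bool)) : Ocar k :=
  if r is Some (n, f) then
    (if @insub _ (fun n => n < k) 'I_k n is Some i then insub (i, f) else None)
  else None.

Lemma toraw_valid k x : rvalid k (toraw (k := k) x).
Proof. by case: x => [[[i b] /= H]|]. Qed.

Lemma fromrawK k r : rvalid k r -> toraw (fromraw k r) = r.
Proof.
case: r => [[n f]|] //= H.
have Hn : n < k by move: H; rewrite /okv /= => /andP[].
rewrite (insubT (fun n => n < k) Hn) /=.
by rewrite insubT.
Qed.

Lemma torawK k x : fromraw k (toraw x) = x.
Proof.
case: x => [[[i b] /= H]|] //=.
rewrite (insubT (fun n => n < k) (ltn_ord i)) /=.
have -> : Sub (nat_of_ord i) (ltn_ord i) = i by apply: val_inj.
by rewrite insubT.
Qed.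

Definition omul k (x y : Ocar k) : Ocar k := fromraw k (rmul k (toraw x) (toraw y)).

Lemma omulA k : associative (@omul k).
Proof.
move=> x y z; rewrite /omul !fromrawK ?rmul_valid // rmulA //; exact: toraw_valid.
Qed.

Lemma Ocar_ne k : 0 < #|Ocar k|.
Proof. by apply/card_gt0P; exists None. Qed.

Definition Osg (k : nat) : fsg := FSG (@omulA k) (Ocar_ne k).

Definition is_monoid (S : fsg) : bool :=
  [exists u : S, [forall s : S, (fmul S u s == s) && (fmul S s u == s)]].

(* S^bullet is modelled inside option S: None is the adjoined identity I,
   which is present exactly when S is not a monoid. *)
Definition bpred (S : fsg) (b : option S) : bool := ~~ (is_monoid S && (b == None)).
Arguments bpred : clear implicits.
Definition Bul (S : fsg) : finType := {b : option S | bpred S b}.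

Definition bmul (S : fsg) (b : option S) (s : S) : option S :=
  Some (if b is Some a then fmul S a s else s).

Lemma bpred_bmul (S : fsg) b s : bpred S (bmul b s).
Proof. by rewrite /bpred /bmul /= andbF. Qed.

Definition rho (S : fsg) (s : S) : {ffun Bul S -> Bul S} :=
  [ffun b : Bul S => Sub (bmul (val b) s) (bpred_bmul (val b) s)].
Definition cst (S : fsg) (t : Bul S) : {ffun Bul S -> Bul S} := [ffun _ => t].

Definition barpred (S : fsg) (f : {ffun Bul S -> Bul S}) : bool :=
  [exists s : S, f == rho s] || [exists t : Bul S, f == cst t].

(* transformations act on the right: x (f g) = (x f) g *)
Definition tcomp (S : fsg) (f g : {ffun Bul S -> Bul S}) : {ffun Bul S -> Bul S} :=
  [ffun x => g (f x)].

Lemma barpred_comp (S : fsg) f g :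
  barpred f -> barpred g -> barpred (tcomp (S := S) f g).
Proof.
case/orP=> [/existsP[s /eqP->]|/existsP[t /eqP->]];
case/orP=> [/existsP[s' /eqP->]|/existsP[t' /eqP->]].
- apply/orP; left; apply/existsP; exists (fmul S s s'); apply/eqP/ffunP => b.
  rewrite !ffunE; apply: val_inj => /=.
  by rewrite /bmul; case: (sval b) => [a|] //=; rewrite fmulA.
- by apply/orP; right; apply/existsP; exists t'; apply/eqP/ffunP => b; rewrite !ffunE.
- apply/orP; right; apply/existsP; exists (rho s' t); apply/eqP/ffunP => b.
  by rewrite !ffunE.
- by apply/orP; right; apply/existsP; exists t'; apply/eqP/ffunP => b; rewrite !ffunE.
Qed.

Definition Barcar (S : fsg) : finType := {f : {ffun Bul S -> Bul S} | barpred f}.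

Definition barmul (S : fsg) (f g : Barcar S) : Barcar S :=
  Sub (tcomp (val f) (val g)) (barpred_comp (valP f) (valP g)).

Lemma barmulA (S : fsg) : associative (@barmul S).
Proof. by move=> f g h; apply: val_inj; apply/ffunP => x; rewrite /= !ffunE. Qed.

Lemma Barcar_ne (S : fsg) : 0 < #|Barcar S|.
Proof.
have /card_gt0P[s _] := fne S.
have Hb : bpred S (Some s) by rewrite /bpred andbF.
have Hc : barpred (cst (Sub (Some s) Hb : Bul S)).
  by apply/orP; right; apply/existsP; eexists.
by apply/card_gt0P; exists (Sub _ Hc).
Qed.

Definition bar (S : fsg) : fsg := FSG (@barmulA S) (Barcar_ne S).

Definition Obar (k : nat) : fsg := bar (Osg k).

(* A pseudovariety is closed
   under finite direct products (the empty product being a trivial semigroup,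
   plus binary products), subsemigroups (up to isomorphism: injective homs)
   and homomorphic images. *)
Definition pseudovariety (V : fsg -> Prop) : Prop :=
  [/\ (forall S : fsg, #|S| = 1 -> V S),
      (forall S T : fsg, V S -> V T -> V (fprod S T)),
      (forall (S T : fsg) (h : T -> S), is_hom h -> injective h -> V S -> V T) &
      (forall (S T : fsg) (h : S -> T), is_hom h -> (forall y, exists x, h x = y) ->
         V S -> V T)].

Definition subclass (V W : fsg -> Prop) : Prop := forall S, V S -> W S.

Definition pv_gen (C : fsg -> Prop) : fsg -> Prop :=
  fun T => forall V, pseudovariety V -> subclass C V -> V T.

Definition pv_of (S : fsg) : fsg -> Prop := pv_gen (fun T => T = S).

Definition pv_join (X : (fsg -> Prop) -> Prop) : fsg -> Prop :=
  pv_gen (fun T => exists2 V, X V & V T).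

Definition join_irreducible (V : fsg -> Prop) : Prop :=
  forall X : (fsg -> Prop) -> Prop, (forall W, X W -> pseudovariety W) ->
    subclass V (pv_join X) -> exists2 W, X W & subclass V W.

Definition Excl (S : fsg) : fsg -> Prop := fun T => ~ pv_of T S.

(* ---------- the free profinite semigroup on {a,b,c} ----------
   realised (Reiterman/Almeida) as the semigroup of 3-ary implicit operations on
   finite semigroups: families pi_S : S^{a,b,c} -> S commuting with all
   homomorphisms between finite semigroups. *)
Inductive letter := la | lb | lc.

Record impl := Impl {
  iop : forall S : fsg, (letter -> S) -> S;
  iop_nat : forall (S T : fsg) (h : S -> T), is_hom h ->
              forall phi : letter -> S, h (iop phi) = iop (h \o phi) }.
Arguments iop : clear implicits.

Lemma impl_mul_nat (u v : impl) (S T : fsg) (h : S -> T) : is_hom h ->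
  forall phi : letter -> S,
    h (fmul S (iop u S phi) (iop v S phi)) = fmul T (iop u T (h \o phi)) (iop v T (h \o phi)).
Proof. move=> hh phi; rewrite hh. rewrite (iop_nat u hh) (iop_nat v hh). by []. Qed.

Definition impl_mul (u v : impl) : impl :=
  @Impl (fun S phi => fmul S (iop u S phi) (iop v S phi)) (@impl_mul_nat u v).

Definition is_ideal (I : impl -> Prop) : Prop :=
  (exists x, I x) /\
  (forall x u, I x -> I (impl_mul u x) /\ I (impl_mul x u)).

Definition in_minimal_ideal (e : impl) : Prop :=
  forall I, is_ideal I -> I e.

(* spow x n = x^(n+1) *)
Definition spow (S : fsg) (x : S) (n : nat) : S := iter n (fun y => fmul S y x) x.
(* x^omega = x^(|S|!), the idempotent power of x *)
Definition omega (S : fsg) (x : S) : S := spow x (#|S|`!).-1.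
Definition omega1 (S : fsg) (x : S) : S := fmul S (omega x) x.

Definition sat_pid (k : nat) (e : impl) (T : fsg) : Prop :=
  forall phi : letter -> T,
    let E := iop e T phi in
    let P := spow (fmul T (omega (phi la)) (phi lb)) (k - 2) in
    omega (fmul T (fmul T E (phi lc)) P) =
    omega (fmul T (fmul T E (phi lc)) (omega1 P)).

(* Main.v *)
Require Import Defs.
From mathcomp Require Import all_boot.
From mathcomp Require Import zify.
From Stdlib Require Import Classical ClassicalEpsilon FunctionalExtensionality.
Set Implicit Arguments. Unset Strict Implicit. Unset Printing Implicit Defensive.

Notation "x ** y" := (fmul _ x y) (at level 40, left associativity).

Section Pow.
Variable S : fsg.
Implicit Types x y z : S.

Lemma mA x y z : x ** (y ** z) = x ** y ** z.
Proof. exact: fmulA. Qed.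

Lemma spowS x n : spow x n.+1 = spow x n ** x.
Proof. by []. Qed.

Lemma spow0 x : spow x 0 = x.
Proof. by []. Qed.

Lemma spowSl x n : spow x n.+1 = x ** spow x n.
Proof. elim: n => [|n IH] //; by rewrite spowS [in LHS]IH -mA. Qed.

Lemma spowD x a b : spow x a ** spow x b = spow x (a + b).+1.
Proof.
elim: b => [|b IH]; first by rewrite addn0.
by rewrite spowS mA IH addnS.
Qed.

Lemma spowC x a b : spow x a ** spow x b = spow x b ** spow x a.
Proof. by rewrite !spowD addnC. Qed.

Lemma spowM x a b : spow (spow x a) b = spow x ((a.+1 * b.+1).-1).
Proof.
elim: b => [|b IH]; first by rewrite muln1.
rewrite spowS IH spowD; congr spow.
have h : 0 < a.+1 * b.+1 by rewrite muln_gt0.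
rewrite mulnS; lia.
Qed.

Definition NN := #|S|`!.

Lemma NN_gt0 : 0 < NN.
Proof. exact: fact_gt0. Qed.

Lemma omegaE x : omega x = spow x NN.-1.
Proof. by []. Qed.

Lemma period x : exists a d, [/\ 0 < d, d <= #|S|, a < #|S| &
   forall m c, a <= m -> spow x (m + c * d) = spow x m].
Proof.
pose f (i : 'I_(#|S|.+1)) := spow x i.
have [/existsP[i /existsP[j /andP[ij /eqP fij]]]|H] :=
  boolP [exists i, exists j, (i != j) && (f i == f j)].
  wlog lt : i j ij fij / (i < j)%N.
    move=> W; case: (ltngtP i j) => h; first exact: W h.
      by apply: (W j i) => //; rewrite eq_sym.
    by move: ij; rewrite (val_inj h) eqxx.
  have fij' : spow x i = spow x j by [].
  have Hper : forall m, (i <= m)%N -> spow x (m + (j - i)) = spow x m.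
    move=> m; elim: m => [|m IH] hm.
      have -> : 0 + (j - i) = j by lia.
      by have -> : 0 = i :> nat by lia.
    case: (ltngtP i m.+1) => h.
    - by rewrite addSn spowS IH // spowS.
    - lia.
    - have -> : m.+1 + (j - i) = j by lia.
      by rewrite -h.
  exists i, (j - i); split.
  - lia.
  - have := ltn_ord j; lia.
  - have := ltn_ord j; lia.
  - move=> m c hm; elim: c => [|c IH]; first by rewrite mul0n addn0.
    have -> : m + c.+1 * (j - i) = (m + c * (j - i)) + (j - i) by rewrite mulSn; lia.
    rewrite Hper ?IH //; lia.
have inj : injective f.
  move=> i j fij; apply/eqP; apply/negPn/negP => ne.
  move/negP: H; apply; apply/existsP; exists i; apply/existsP; exists j.
  by rewrite ne fij eqxx.
have := leq_card f inj; rewrite card_ord; lia.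
Qed.

Lemma omega_mult x c : 0 < c -> spow x (c * NN).-1 = omega x.
Proof.
move=> c0; have [a [d [d0 dS aS P]]] := period x.
have dN : d %| NN by apply: dvdn_fact; rewrite d0.
have aN : a <= NN.-1.
  have := fact_geq #|S|; rewrite /NN; lia.
case/dvdnP: dN => q Hq.
rewrite omegaE.
have -> : (c * NN).-1 = NN.-1 + ((c.-1 * q) * d).
  rewrite Hq; have := NN_gt0; rewrite Hq => h.
  have : 0 < q by lia.
  move: c0; case: c => // c _ _ /=; rewrite mulSn; nia.
by rewrite P.
Qed.

Lemma omega_idem x : omega x ** omega x = omega x.
Proof.
rewrite !omegaE spowD -[X in _ = X]omegaE -(omega_mult x (c:=2)) //; congr spow.
have := NN_gt0; lia.
Qed.

Lemma idem_spow x n : x ** x = x -> spow x n = x.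
Proof. by move=> h; elim: n => [|n IH] //; rewrite spowS IH h. Qed.

Lemma omega_of_idem x : x ** x = x -> omega x = x.
Proof. exact: idem_spow. Qed.

Lemma omega_unique x m : spow x m ** spow x m = spow x m -> spow x m = omega x.
Proof.
move=> h.
rewrite -{1}(idem_spow NN.-1 h) spowM.
rewrite -(omega_mult x (c := m.+1)) //; congr spow.
have := NN_gt0; case: NN => // N _; lia.
Qed.

Lemma omega_spow x m : omega (spow x m) = omega x.
Proof.
rewrite omegaE spowM -(omega_mult x (c:= m.+1)) //; congr spow.
have := NN_gt0; case: NN => // N _; lia.
Qed.

Lemma omega_comm x m : omega x ** spow x m = spow x m ** omega x.
Proof. by rewrite omegaE spowC. Qed.

End Pow.

Section Hom.
Variables S T : fsg.
Variable h : S -> T.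
Hypothesis hh : is_hom h.

Lemma hom_spow x n : h (spow x n) = spow (h x) n.
Proof. by elim: n => [|n IH] //; rewrite !spowS hh IH. Qed.

Lemma hom_omega x : h (omega x) = omega (h x).
Proof.
rewrite omegaE hom_spow; apply: omega_unique.
by rewrite -hom_spow -hh omega_idem.
Qed.

Lemma hom_omega1 x : h (omega1 x) = omega1 (h x).
Proof. by rewrite /omega1 hh hom_omega. Qed.
End Hom.

Section Gen.
Variable k : nat.

Definition Pk (T : fsg) (phi : letter -> T) : T :=
  spow (fmul T (omega (phi la)) (phi lb)) (k - 2).
Definition LHSk (T : fsg) (phi : letter -> T) (E : T) : T :=
  omega (fmul T (fmul T E (phi lc)) (Pk phi)).
Definition RHSk (T : fsg) (phi : letter -> T) (E : T) : T :=
  omega (fmul T (fmul T E (phi lc)) (omega1 (Pk phi))).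

Lemma sat_pidE e T : sat_pid k e T <-> forall phi, LHSk phi (iop e T phi) = RHSk phi (iop e T phi).
Proof. by []. Qed.

Lemma hom_Pk (S T : fsg) (h : S -> T) : is_hom h -> forall phi,
  h (Pk phi) = Pk (h \o phi).
Proof. by move=> hh phi; rewrite /Pk (hom_spow hh) hh (hom_omega hh). Qed.

Lemma hom_LHS (S T : fsg) (h : S -> T) : is_hom h -> forall phi E,
  h (LHSk phi E) = LHSk (h \o phi) (h E).
Proof. by move=> hh phi E; rewrite /LHSk (hom_omega hh) !hh (hom_Pk hh). Qed.

Lemma hom_RHS (S T : fsg) (h : S -> T) : is_hom h -> forall phi E,
  h (RHSk phi E) = RHSk (h \o phi) (h E).
Proof. by move=> hh phi E; rewrite /RHSk (hom_omega hh) !hh (hom_omega hh) (hom_Pk hh). Qed.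

Definition SelClass (Sel : forall T : fsg, (letter -> T) -> T -> Prop) (T : fsg) : Prop :=
  forall phi E, Sel T phi E -> LHSk phi E = RHSk phi E.

Lemma fst_hom (S T : fsg) : is_hom (fun p : Defs.fprod S T => p.1).
Proof. by []. Qed.
Lemma snd_hom (S T : fsg) : is_hom (fun p : Defs.fprod S T => p.2).
Proof. by []. Qed.

Lemma SelClass_pv (Sel : forall T : fsg, (letter -> T) -> T -> Prop) :
  (forall (S T : fsg) phi (E : Defs.fprod S T), Sel _ phi E ->
      Sel S (fun l => (phi l).1) E.1 /\ Sel T (fun l => (phi l).2) E.2) ->
  (forall (S T : fsg) (h : T -> S), is_hom h -> forall phi E, Sel T phi E -> Sel S (h \o phi) (h E)) ->
  (forall (S T : fsg) (h : S -> T), is_hom h -> (forall y, exists x, h x = y) ->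
      forall phi E, Sel T phi E -> exists psi E', [/\ Sel S psi E', h \o psi = phi & h E' = E]) ->
  pseudovariety (SelClass Sel).
Proof.
move=> Hp Hs Hq; split.
- move=> S S1 phi E _.
  have /card_le1_eqP H : #|S| <= 1 by rewrite S1.
  by apply: H.
- move=> S T HS HT phi E /Hp [H1 H2].
  have e1 := HS _ _ H1; have e2 := HT _ _ H2.
  have f1 := hom_LHS (@fst_hom S T) phi E; have f2 := hom_RHS (@fst_hom S T) phi E.
  have g1 := hom_LHS (@snd_hom S T) phi E; have g2 := hom_RHS (@snd_hom S T) phi E.
  move: f1 f2 g1 g2; rewrite /= => f1 f2 g1 g2.
  move: e1 e2; rewrite -f1 -f2 -g1 -g2.
  by case: (LHSk phi E) => a b; case: (RHSk phi E) => c d /= -> ->.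
- move=> S T h hh hi HS phi E HE.
  apply: hi; rewrite hom_LHS // hom_RHS //; exact: HS (Hs _ _ _ hh _ _ HE).
- move=> S T h hh hs HS phi E HE.
  have [psi [E' [H1 H2 H3]]] := Hq _ _ _ hh hs _ _ HE.
  by rewrite -H2 -H3 -hom_LHS // -hom_RHS // HS.
Qed.

End Gen.

Lemma pv_of_self S : pv_of S S.
Proof. by move=> V _ H; apply: H. Qed.

Lemma pv_of_sub S V : pseudovariety V -> V S -> subclass (pv_of S) V.
Proof. by move=> pV VS T H; apply: H => // U ->. Qed.

Lemma pv_gen_sub C V : pseudovariety V -> subclass C V -> subclass (pv_gen C) V.
Proof. by move=> pV CV T H; apply: H. Qed.

Lemma JI_crit S (G : fsg -> Prop) : pseudovariety G -> ~ G S ->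
  (forall T, ~ G T -> pv_of T S) -> join_irreducible (pv_of S).
Proof.
move=> pG nGS H X pX Hsub.
apply: NNPP => nex.
have WG : forall W, X W -> subclass W G.
  move=> W XW T WT; apply: NNPP => nGT.
  apply: nex; exists W => //; apply: pv_of_sub (pX _ XW) _.
  by apply: (H T nGT W (pX _ XW)) => U ->.
have HS := Hsub S (@pv_of_self S).
have sC : subclass (fun T => exists2 V, X V & V T) G.
  by move=> T [W XW WT]; apply: WG XW T WT.
exact: nGS (pv_gen_sub pG sC HS).
Qed.

Definition Vk (k : nat) (T : fsg) : Prop := forall x : T, spow x (k - 1) = spow x k.

Lemma Vk_pv k : pseudovariety (Vk k).
Proof.
split.
- move=> S S1 x.
  have /card_le1_eqP H : #|S| <= 1 by rewrite S1.
  by apply: H.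
- move=> S T HS HT x.
  have f1 := hom_spow (@fst_hom S T) x; have g1 := hom_spow (@snd_hom S T) x.
  move: (f1 (k-1)) (f1 k) (g1 (k-1)) (g1 k) => /= a b c d.
  move: (HS x.1) (HT x.2); rewrite -a -b -c -d.
  by case: (spow x (k-1)) => ? ?; case: (spow x k) => ? ? /= -> ->.
- move=> S T h hh hi HS x; apply: hi; by rewrite !hom_spow // HS.
- move=> S T h hh hs HS y; have [x <-] := hs y; by rewrite -!hom_spow // HS.
Qed.

Definition pb (P : Prop) : bool := if excluded_middle_informative P then true else false.
Lemma pbP (P : Prop) : reflect P (pb P).
Proof. rewrite /pb; case: excluded_middle_informative => h; by constructor. Qed.

Definition limpl (l : letter) : impl :=
  @Impl (fun S phi => phi l) (fun S T h hh phi => erefl).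

Section K.
Variable T : fsg.
Variable phi : letter -> T.
Implicit Types x y z t s a b k p g P : T.

Definition Tpp t := exists u : impl, iop u T phi = t.
Definition om (A : option T) t := if A is Some a then a ** t else t.
Definition mo t (B : option T) := if B is Some b then t ** b else t.
Definition Kset t := forall s, Tpp s -> exists A B, t = om A (mo s B).
Definition SelK t := Tpp t /\ Kset t.

Lemma Tpp_mul x y : Tpp x -> Tpp y -> Tpp (x ** y).
Proof. by move=> [u <-] [v <-]; exists (impl_mul u v). Qed.
Lemma Tpp_letter l : Tpp (phi l).
Proof. by exists (limpl l). Qed.
Lemma Tpp_spow x n : Tpp x -> Tpp (spow x n).
Proof. by move=> h; elim: n => [|n IH] //; rewrite spowS; apply: Tpp_mul. Qed.
Lemma Tpp_omega x : Tpp x -> Tpp (omega x).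
Proof. exact: Tpp_spow. Qed.

Definition omx x (A : option T) : option T :=
  Some (if A is Some a then x ** a else x).
Lemma omxE x A y : om (omx x A) y = x ** om A y.
Proof. by case: A => [a|] //=; rewrite mA. Qed.
Definition mox (B : option T) x : option T :=
  Some (if B is Some b then b ** x else x).
Lemma moxE x B y : mo y (mox B x) = mo y B ** x.
Proof. by case: B => [b|] //=; rewrite mA. Qed.
Lemma om_mul A x y : om A (x ** y) = om A x ** y.
Proof. by case: A => //= a; rewrite mA. Qed.
Lemma mo_mul B x y : mo (x ** y) B = x ** mo y B.
Proof. by case: B => //= b; rewrite mA. Qed.
Lemma om_mo A B x : om A (mo x B) = mo (om A x) B.
Proof. by case: A; case: B => //= a b; rewrite mA. Qed.

Lemma Kset_mull x t : Kset t -> Kset (x ** t).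
Proof.
move=> H s /H [A [B ->]]; exists (omx x A), B; by rewrite omxE.
Qed.
Lemma Kset_mulr x t : Kset t -> Kset (t ** x).
Proof.
move=> H s /H [A [B ->]]; exists A, (mox B x); by rewrite moxE om_mul.
Qed.
Lemma Kset_spow t n : Kset t -> Kset (spow t n).
Proof. by move=> h; elim: n => [|n IH] //; rewrite spowS; apply: Kset_mulr. Qed.
Lemma SelK_mulr x t : SelK t -> Tpp x -> SelK (t ** x).
Proof. by move=> [h1 h2] h3; split; [apply: Tpp_mul|apply: Kset_mulr]. Qed.
Lemma SelK_mull x t : SelK t -> Tpp x -> SelK (x ** t).
Proof. by move=> [h1 h2] h3; split; [apply: Tpp_mul|apply: Kset_mull]. Qed.

Lemma foldl_right (l : seq T) acc : exists B, foldl (fun a s => a ** s) acc l = mo acc B.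
Proof.
elim: l acc => [|x l IH] acc /=; first by exists None.
have [B ->] := IH (acc ** x).
exists (Some (mo x B)); by case: B => //= b; rewrite mA.
Qed.

Lemma foldl_in (l : seq T) acc s : s \in l ->
  exists A B, foldl (fun a s => a ** s) acc l = om A (mo s B).
Proof.
elim: l acc => [|x l IH] acc //=; rewrite in_cons => /orP [/eqP<-|h].
- have [B ->] := foldl_right l (acc ** s); exists (Some acc), B.
  by rewrite /= mo_mul.
- exact: IH.
Qed.

Lemma foldl_Tpp (l : seq T) acc : Tpp acc -> all (fun x => pb (Tpp x)) l ->
  Tpp (foldl (fun a s => a ** s) acc l).
Proof.
elim: l acc => [|x l IH] acc //= h /andP [/pbP hx hl].
by apply: IH => //; apply: Tpp_mul.
Qed.

Lemma witness : exists E, SelK E.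
Proof.
pose l := [seq x <- enum T | pb (Tpp x)].
exists (foldl (fun a s => a ** s) (phi la) l); split.
- apply: foldl_Tpp; first exact: Tpp_letter.
  by apply/allP => x; rewrite mem_filter => /andP[].
- move=> s hs; apply: foldl_in.
  by rewrite mem_filter mem_enum andbT; apply/pbP.
Qed.

Lemma onesided_l a k : k = a ** k -> k = omega a ** k.
Proof.
move=> h; rewrite omegaE; elim: (NN T).-1 => [|n IH] //.
by rewrite spowS -mA -h.
Qed.
Lemma onesided_r b k : k = k ** b -> k = k ** omega b.
Proof.
move=> h; rewrite omegaE; elim: (NN T).-1 => [|n IH] //.
by rewrite spowS mA -IH -h.
Qed.
Lemma twosided a b k : k = a ** k ** b -> k = omega a ** k /\ k = k ** omega b.
Proof.
move=> h.
have H : forall n, k = spow a n ** k ** spow b n.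
  elim=> [|n IH] //; rewrite spowS spowSl.
  have -> : spow a n ** a ** k ** (b ** spow b n) = spow a n ** (a ** k ** b) ** spow b n.
    by rewrite !mA.
  by rewrite -h.
have H1 := H (NN T).-1; rewrite -!omegaE in H1.
have e1 : k = omega a ** k.
  by rewrite {2}H1 !mA omega_idem -H1.
split => //.
by rewrite {2}H1 -mA omega_idem -H1.
Qed.

Lemma K2 k p : SelK k -> Tpp p -> exists W, om W (p ** k) = k.
Proof.
move=> [hk kk] hp.
have [A [B e]] := kk _ (Tpp_mul hp hk).
pose a := om A p.
have e' : k = mo (a ** k) B by rewrite {1}e om_mo om_mul.
have Hk : k = omega a ** k.
  clear e; case: B e' => [b|] /= e'.
  - by case: (twosided e').
  - exact: onesided_l.
move: Hk; rewrite omegaE; case: (NN T).-1 => [|m].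
- rewrite /a -om_mul => Hk; by exists A.
- rewrite spowS /a -mA -om_mul -omxE => Hk; by eexists; exact: (esym Hk).
Qed.

Lemma K2' k p : SelK k -> Tpp p -> exists W, mo (k ** p) W = k.
Proof.
move=> [hk kk] hp.
have [A [B e]] := kk _ (Tpp_mul hk hp).
pose b := mo p B.
have e' : k = om A (k ** b) by rewrite {1}e /b mo_mul.
have Hk : k = k ** omega b.
  clear e; case: A e' => [a|] /= e'.
  - by rewrite mA in e'; case: (twosided e').
  - exact: onesided_r.
move: Hk; rewrite omegaE; case: (NN T).-1 => [|m].
- rewrite /b -mo_mul => Hk; by exists B.
- rewrite spowSl /b mA -mo_mul -moxE => Hk; by eexists; exact: (esym Hk).
Qed.

Definition Lrel x y := exists W, om W x = y.
Definition Leq x y := Lrel x y /\ Lrel y x.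

Lemma Lrel_refl x : Lrel x x.
Proof. by exists None. Qed.
Lemma Lrel_trans x y z : Lrel x y -> Lrel y z -> Lrel x z.
Proof.
move=> [W1 <-] [W2 <-]; exists (if W2 is Some w then Some (mo w W1) else W1).
by case: W2 => //= w; case: W1 => //= w1; rewrite mA.
Qed.
Lemma Lrel_mulr x y z : Lrel x y -> Lrel (x ** z) (y ** z).
Proof. by move=> [W <-]; exists W; rewrite om_mul. Qed.
Lemma Leq_refl x : Leq x x.
Proof. split; exact: Lrel_refl. Qed.
Lemma Leq_sym x y : Leq x y -> Leq y x.
Proof. by case. Qed.
Lemma Leq_trans x y z : Leq x y -> Leq y z -> Leq x z.
Proof. by move=> [a b] [c d]; split; apply: Lrel_trans; eassumption. Qed.
Lemma Leq_mulr x y z : Leq x y -> Leq (x ** z) (y ** z).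
Proof. by move=> [a b]; split; apply: Lrel_mulr. Qed.

Lemma Leq_K p k : SelK k -> Tpp p -> Leq (p ** k) k.
Proof.
move=> hk hp; split; first exact: K2.
by exists (Some p).
Qed.

Lemma Lrel_omega x : Lrel x (omega x).
Proof.
rewrite omegaE; case: (NN T).-1 => [|m]; first exact: Lrel_refl.
by exists (Some (spow x m)); rewrite spowS.
Qed.

Lemma Lrel_omega_back k : SelK k -> Lrel (omega k) k.
Proof.
move=> hk; rewrite omegaE; case: (NN T).-1 => [|m]; first exact: Lrel_refl.
rewrite spowS; apply: K2 => //; apply: Tpp_spow; by case: hk.
Qed.


Lemma right_fact g P m : Tpp g -> Tpp P -> exists X, Tpp X /\ spow (g ** P) m = g ** X.
Proof.
move=> hg hP; case: m => [|m]; first by exists P.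
exists (P ** spow (g ** P) m); split.
- by apply: Tpp_mul => //; apply: Tpp_spow; apply: Tpp_mul.
- by rewrite spowSl mA.
Qed.

Lemma Lfail g P (P' : T) : SelK g -> Tpp P -> Tpp P' ->
  Leq (g ** P) (g ** P') -> omega (g ** P) = omega (g ** P').
Proof.
move=> hg hP hP' [_ hL].
have sa : SelK (g ** P) by apply: SelK_mulr.
have sb : SelK (g ** P') by apply: SelK_mulr.
have [W hW] : Lrel (omega (g ** P')) (omega (g ** P)).
  apply: Lrel_trans (Lrel_omega_back sb) _.
  apply: Lrel_trans hL _; exact: Lrel_omega.
have e1 : omega (g ** P) ** omega (g ** P') = omega (g ** P).
  by rewrite -hW -om_mul omega_idem.
have [X [hX eX]] := right_fact (NN T).-1 hg.1 hP.
have [Y [hY eY]] := right_fact (NN T).-1 hg.1 hP'.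
rewrite -!omegaE in eX eY.
have [Z hZ] := K2' hg hX.
have e2 : omega (g ** P) ** g = g.
  have eZ : mo (omega (g ** P)) Z = g by rewrite eX.
  have -> : omega (g ** P) ** g = mo (omega (g ** P) ** omega (g ** P)) Z.
    by rewrite mo_mul eZ.
  by rewrite omega_idem eZ.
by rewrite -e1 eY mA e2.
Qed.

Lemma kpk k p : SelK k -> Tpp p -> k ** omega (p ** k) = k.
Proof.
move=> hk hp.
have sa : SelK (p ** k) by apply: SelK_mull.
have [W hW] : Lrel (omega (p ** k)) k.
  apply: Lrel_trans (Lrel_omega_back sa) _; exact: K2.
have -> : k ** omega (p ** k) = om W (omega (p ** k) ** omega (p ** k)) by rewrite om_mul hW.
by rewrite omega_idem hW.
Qed.

End K.

Arguments Tpp : clear implicits.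
Arguments Kset : clear implicits.
Arguments SelK : clear implicits.

Lemma hom_ommo (S T : fsg) (h : T -> S) : is_hom h -> forall A B s,
  h (om A (mo s B)) = om (omap h A) (mo (h s) (omap h B)).
Proof. by move=> hh [a|] [b|] s /=; rewrite ?hh. Qed.

Lemma Tpp_hom (S T : fsg) (h : T -> S) phi t : is_hom h -> Tpp T phi t -> Tpp S (h \o phi) (h t).
Proof. by move=> hh [u <-]; exists u; rewrite (iop_nat u hh). Qed.

Lemma SelK_hom (S T : fsg) (h : T -> S) phi E : is_hom h -> SelK T phi E -> SelK S (h \o phi) (h E).
Proof.
move=> hh [h1 h2]; split; first exact: Tpp_hom.
move=> s [u <-]; rewrite -(iop_nat u hh).
have [A [B ->]] := h2 _ (ex_intro _ u erefl).
by exists (omap h A), (omap h B); rewrite hom_ommo.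
Qed.

Definition lift (S T : fsg) (h : S -> T) (hs : forall y, exists x, h x = y) (phi : letter -> T) : letter -> S :=
  fun l => proj1_sig (constructive_indefinite_description _ (hs (phi l))).

Lemma liftE (S T : fsg) (h : S -> T) hs phi : h \o (@lift S T h hs phi) = phi.
Proof.
apply: functional_extensionality => l; rewrite /lift /=.
by case: constructive_indefinite_description.
Qed.

Definition GoodK (k : nat) := SelClass k SelK.

Lemma GoodK_pv k : pseudovariety (GoodK k).
Proof.
apply: SelClass_pv.
- move=> S T phi E H; split.
  + exact: (SelK_hom (@fst_hom S T) H).
  + exact: (SelK_hom (@snd_hom S T) H).
- move=> S T h hh phi E; exact: SelK_hom.
- move=> S T h hh hs phi E [[u hu] hK].
  pose psi := lift hs phi.
  have hpsi : h \o psi = phi by apply: liftE.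
  have [W [hW1 hW2]] := witness psi.
  pose E0 := iop u S psi.
  have hE0 : h E0 = E by rewrite /E0 (iop_nat u hh) hpsi.
  have tE0 : Tpp S psi E0 by exists u.
  have sel : SelK S psi (E0 ** omega (W ** E0)).
    split.
    * by apply: Tpp_mul => //; apply: Tpp_omega; apply: Tpp_mul.
    * rewrite omegaE; exact: (Kset_mull _ (Kset_spow _ (Kset_mulr _ hW2))).
  exists psi, (E0 ** omega (W ** E0)); split => //.
  rewrite hh (hom_omega hh) hh hE0; apply: (@kpk T phi); first by split; [exists u | exact: hK].
  by have := Tpp_hom hh hW1; rewrite hpsi.
Qed.

Definition SelE (e : impl) (T : fsg) (phi : letter -> T) (E : T) : Prop := E = iop e T phi.

Lemma satE_pv k e : pseudovariety (SelClass k (SelE e)).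
Proof.
apply: SelClass_pv.
- move=> S T phi E ->; split.
  + exact: (iop_nat e (@fst_hom S T)).
  + exact: (iop_nat e (@snd_hom S T)).
- by move=> S T h hh phi E ->; rewrite /SelE (iop_nat e hh).
- move=> S T h hh hs phi E ->.
  exists (lift hs phi), (iop e S (lift hs phi)); split; [done | exact: liftE | ].
  by rewrite (iop_nat e hh) liftE.
Qed.

Lemma sat_SelE k e T : sat_pid k e T <-> SelClass k (SelE e) T.
Proof.
split.
- by move=> H phi E ->; exact: H.
- by move=> H phi; apply: H.
Qed.

Lemma minideal_K e T phi : in_minimal_ideal e -> SelK T phi (iop e T phi).
Proof.
move=> H; split; first by exists e.
apply: (H (fun u => Kset T phi (iop u T phi))); split.
- have [W [[w hw] hK]] := witness phi.
  by exists w; rewrite hw.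
- move=> x u hx; split.
  + exact: Kset_mull.
  + exact: Kset_mulr.
Qed.

Section Ok.
Variable k : nat.
Hypothesis k2 : 2 <= k.

Notation OS := (Osg k).

Lemma toraw_inj : injective (@toraw k).
Proof. by move=> a b e; rewrite -(torawK a) -(torawK b) e. Qed.

Lemma toraw_mul (a b : OS) : toraw (a ** b) = rmul k (toraw a) (toraw b).
Proof. by rewrite /= /omul fromrawK // rmul_valid. Qed.

Lemma toraw_fromraw r : rvalid k r -> toraw (fromraw k r) = r.
Proof. exact: fromrawK. Qed.

Definition eO : OS := fromraw k (Some (0, true)).
Definition xO : OS := fromraw k (Some (1, false)).
Definition zO : OS := fromraw k None.

Lemma toraw_eO : toraw eO = Some (0, true).
Proof. by rewrite toraw_fromraw //= /okv /=; lia. Qed.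
Lemma toraw_xO : toraw xO = Some (1, false).
Proof. by rewrite toraw_fromraw //= /okv /=; lia. Qed.
Lemma toraw_zO : toraw zO = None.
Proof. by []. Qed.

Lemma notmonoid : is_monoid OS = false.
Proof.
apply/negbTE/existsP => -[u /forallP H].
move: (H xO) => /andP [_ /eqP].
move/(congr1 (@toraw k)); rewrite toraw_mul toraw_xO.
have vu := toraw_valid u.
case: (toraw u) vu => [[i b]|] //= vu.
case: ifP => // _ [] e1 e2.
have i0 : i = 0 by lia.
have b0 : b = false by move: e2; rewrite orbF.
by move: vu; rewrite i0 b0 /okv /= andbF.
Qed.

Lemma bpredI : bpred OS None.
Proof. by rewrite /bpred notmonoid. Qed.
Lemma bpredS (s : OS) : bpred OS (Some s).
Proof. by rewrite /bpred andbF. Qed.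

Definition IB : Bul OS := Sub None bpredI.
Definition someB (s : OS) : Bul OS := Sub (Some s) (bpredS s).

Lemma barpred_rho (s : OS) : barpred (rho s).
Proof. by apply/orP; left; apply/existsP; exists s. Qed.
Lemma barpred_cst (t : Bul OS) : barpred (cst t).
Proof. by apply/orP; right; apply/existsP; exists t. Qed.

Definition rhoB (s : OS) : Obar k := Sub (rho s) (barpred_rho s).
Definition cstB (t : Bul OS) : Obar k := Sub (cst t) (barpred_cst t).

Lemma rhoB_val (s : OS) (t : Bul OS) : val (val (rhoB s) t) = Some (if val t is Some a then a ** s else s).
Proof. by rewrite /= ffunE. Qed.
Lemma cstB_val (t t' : Bul OS) : val (cstB t) t' = t.
Proof. by rewrite /= ffunE. Qed.

Lemma rhoB_mul (a b : OS) : rhoB a ** rhoB b = rhoB (a ** b).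
Proof.
apply: val_inj; apply/ffunP => t; apply: val_inj.
rewrite /= !ffunE /= /bmul; case: (val t) => [c|] //=.
by rewrite omulA.
Qed.
Lemma mul_cstB (F : Obar k) t : F ** cstB t = cstB t.
Proof. by apply: val_inj; apply/ffunP => x; rewrite /= !ffunE. Qed.
Lemma cstB_rhoB t (s : OS) : cstB t ** rhoB s = cstB (val (rhoB s) t).
Proof. by apply: val_inj; apply/ffunP => x; rewrite /= !ffunE. Qed.

Lemma cstB_inj : injective cstB.
Proof. by move=> a b /(congr1 (fun F : Obar k => val F IB)); rewrite !cstB_val. Qed.
Lemma rhoB_inj : injective rhoB.
Proof.
move=> a b /(congr1 (fun F : Obar k => val (val F IB))); rewrite !rhoB_val /=.
by case.
Qed.

Lemma Obar_cases (F : Obar k) : (exists s, F = rhoB s) \/ (exists t, F = cstB t).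
Proof.
move: (valP F) => /orP [/existsP [s /eqP ef]|/existsP [t /eqP ef]].
- by left; exists s; apply: val_inj.
- by right; exists t; apply: val_inj.
Qed.

Lemma toraw_spow (s : OS) m : toraw (spow s m) =
  if toraw s is Some (i, b) then (if okv k (m.+1 * i, b) then Some (m.+1 * i, b) else None)
  else None.
Proof.
have vs := toraw_valid s.
elim: m => [|m IH].
  by move: vs; case: (toraw s) => [[i b]|] //= vs; rewrite mul1n vs.
rewrite spowS toraw_mul IH; move: vs; case: (toraw s) => [[i b]|] //= vs.
case: ifP => h1 /=.
- have -> : b || b && (i == 0) = b by case: (b).
  by rewrite mulSn addnC.
- case: ifP => // h2; exfalso.
  move: vs h1 h2; rewrite /rvalid !okvE; case: (b) => /=; lia.
Qed.

Lemma Obar_Vk : Vk k (Obar k).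
Proof.
move=> F; case: (Obar_cases F) => [[s ->]|[t ->]].
- have P : forall m, spow (rhoB s) m = rhoB (spow s m).
    by elim=> [|m IH] //; rewrite !spowS IH rhoB_mul.
  rewrite !P; congr rhoB; apply: toraw_inj; rewrite !toraw_spow.
  have vs := toraw_valid s; move: vs.
  case: (toraw s) => [[i b]|] //= vs.
  have -> : (k - 1).+1 = k by lia.
  case: i vs => [|i] vs.
  + by rewrite !muln0.
  + rewrite !okvE; have -> : k * i.+1 < k = false by nia.
    by have -> : k.+1 * i.+1 < k = false by nia.
- have P : forall m, spow (cstB t) m = cstB t.
    by elim=> [|m IH] //; rewrite spowS mul_cstB.
  by rewrite !P.
Qed.

Definition xpow (i : nat) : OS := fromraw k (if okv k (i, false) then Some (i, false) else None).

Lemma toraw_xpow i : toraw (xpow i) = if okv k (i, false) then Some (i, false) else None.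
Proof. by rewrite toraw_fromraw //; case: ifP. Qed.

Lemma xpow_S i : 0 < i -> xpow i ** xO = xpow i.+1.
Proof.
move=> i0; apply: toraw_inj; rewrite toraw_mul toraw_xpow toraw_xO toraw_xpow.
case: ifP => h /=.
- by rewrite addn1.
- case: ifP => // h'; move: h h'; rewrite !okvE /=; lia.
Qed.

Lemma xpow1 : xpow 1 = xO.
Proof. by apply: toraw_inj; rewrite toraw_xpow toraw_xO okvE /=; have -> : 1 < k by []. Qed.

Lemma spow_rhoX m : spow (rhoB xO) m = rhoB (xpow m.+1).
Proof.
elim: m => [|m IH]; first by rewrite /= xpow1.
by rewrite spowS IH rhoB_mul xpow_S.
Qed.

Lemma eO_idem : eO ** eO = eO.
Proof. by apply: toraw_inj; rewrite toraw_mul toraw_eO /= okvE /=; have -> : 0 < k by lia. Qed.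
Lemma eO_xO : eO ** xO = xO.
Proof. by apply: toraw_inj; rewrite toraw_mul toraw_eO toraw_xO /= okvE /=; have -> : 1 < k by lia. Qed.

Definition phi0 (l : letter) : Obar k :=
  match l with la => rhoB eO | lb => rhoB xO | lc => cstB (someB eO) end.

Lemma Obar_fails (E : Obar k) : LHSk k phi0 E <> RHSk k phi0 E.
Proof.
have hP : Pk k phi0 = rhoB (xpow (k - 1)).
  rewrite /Pk.
  have -> : phi0 la = rhoB eO by [].
  have -> : phi0 lb = rhoB xO by [].
  rewrite omega_of_idem; last by rewrite rhoB_mul eO_idem.
  rewrite rhoB_mul eO_xO spow_rhoX.
  by have -> : (k - 2).+1 = k - 1 by lia.
have hz : xpow (k - 1) ** xpow (k - 1) = zO.
  apply: toraw_inj; rewrite toraw_mul toraw_xpow.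
  have h1 : okv k (k - 1, false) by rewrite okvE /=; lia.
  rewrite h1 /=.
  by have -> : okv k (k - 1 + (k - 1), false) = false by rewrite okvE; lia.
have hz2 : zO ** xpow (k - 1) = zO by [].
have hO : omega1 (rhoB (xpow (k - 1))) = rhoB zO.
  rewrite /omega1 omegaE; case: (NN _).-1 => [|m].
  - by rewrite spow0 rhoB_mul hz.
  - have -> : spow (rhoB (xpow (k - 1))) m.+1 = rhoB zO.
      elim: m => [|m IH]; first by rewrite spowS spow0 rhoB_mul hz.
      by rewrite spowS IH rhoB_mul hz2.
    by rewrite rhoB_mul hz2.
rewrite /LHSk /RHSk hP hO.
have -> : phi0 lc = cstB (someB eO) by [].
rewrite !mul_cstB !cstB_rhoB !omega_of_idem ?mul_cstB //.
move/cstB_inj/(congr1 val); rewrite !rhoB_val /=.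
move/(congr1 (fun o => omap (@toraw k) o)) => /=; rewrite !toraw_mul toraw_eO toraw_xpow toraw_zO.
rewrite okvE; have -> : k - 1 < k by lia.
have -> : (k - 1 != 0) = true by apply/eqP; lia.
rewrite /= okvE /= add0n.
have -> : (k - 1 == 0) = false by apply/eqP; lia.
by have -> : k - 1 < k by lia.
Qed.

End Ok.

Lemma Obar_notVk k l : 2 <= k -> k < l -> ~ Vk k (Obar l).
Proof.
move=> k2 kl H; have l2 : 2 <= l by lia.
have := H (rhoB (xO l)); rewrite !(spow_rhoX l2) => /rhoB_inj /(congr1 (@toraw l)).
rewrite !toraw_xpow !okvE /=.
have -> : (k - 1).+1 = k by lia.
have -> : k < l by [].
by case: ifP => _ /(_ l2) /= // -[]; lia.
Qed.

Section D.
Variable k : nat.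
Hypothesis k2 : 2 <= k.
Variable T : fsg.
Variable phi : letter -> T.
Variable E0 : T.
Hypothesis hE : SelK T phi E0.
Hypothesis hfail : LHSk k phi E0 <> RHSk k phi E0.

Definition f := omega (phi la).
Definition y := f ** phi lb.
Definition g := E0 ** phi lc.
Definition Pt i := iter i (fun z => z ** y) g.

Lemma f_idem : f ** f = f.
Proof. exact: omega_idem. Qed.
Lemma fy : f ** y = y.
Proof. by rewrite /y mA f_idem. Qed.

Lemma Tpp_f : Tpp T phi f.
Proof. apply: Tpp_omega; exact: Tpp_letter. Qed.
Lemma Tpp_y : Tpp T phi y.
Proof. apply: Tpp_mul; [exact: Tpp_f | exact: Tpp_letter]. Qed.
Lemma Sel_g : SelK T phi g.
Proof. apply: SelK_mulr => //; exact: Tpp_letter. Qed.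
Lemma Sel_Pt i : SelK T phi (Pt i).
Proof. elim: i => [|i IH]; first exact: Sel_g. by apply: SelK_mulr => //; exact: Tpp_y. Qed.
Lemma Sel_Ptf i : SelK T phi (Pt i ** f).
Proof. apply: SelK_mulr; [exact: Sel_Pt | exact: Tpp_f]. Qed.
Lemma Sel_gy : SelK T phi (g ** y).
Proof. apply: SelK_mulr; [exact: Sel_g | exact: Tpp_y]. Qed.

Lemma PtS i : Pt i.+1 = Pt i ** y.
Proof. by []. Qed.
Lemma Pt_add i m : Pt (i + m.+1) = Pt i ** spow y m.
Proof.
elim: m => [|m IH]; first by rewrite addn1.
by rewrite addnS PtS IH spowS mA.
Qed.
Lemma Pt_iter i m : Pt (i + m) = iter m (fun z => z ** y) (Pt i).
Proof. by rewrite /Pt addnC iterD. Qed.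

Lemma Leq_iter (a b : T) m : Leq a b -> Leq (iter m (fun z => z ** y) a) (iter m (fun z => z ** y) b).
Proof. by move=> h; elim: m => [|m IH] //=; apply: Leq_mulr. Qed.

Lemma gP : g ** Pk k phi = Pt (k - 1).
Proof.
have -> : k - 1 = 0 + (k - 2).+1 by lia.
by rewrite Pt_add.
Qed.
Lemma gP' : g ** omega1 (Pk k phi) = Pt (k - 1) ** omega y.
Proof.
rewrite /omega1 /Pk -/f -/y omega_spow omega_comm mA.
by rewrite -[spow y (k - 2)]/(Pk k phi) gP.
Qed.

Lemma chain i j : i < j -> i <= k - 1 -> ~ Leq (Pt i) (Pt j).
Proof.
move=> ij ik hL; apply: hfail.
have TP : Tpp T phi (Pk k phi) by apply: Tpp_spow; exact: Tpp_y.
rewrite /LHSk /RHSk; apply: Lfail; [exact: Sel_g | exact: TP | | ].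
  by rewrite /omega1; apply: Tpp_mul => //; apply: Tpp_omega.
rewrite -/g gP gP'.
pose d := j - i.
have hd : forall m, Leq (Pt i) (Pt (i + m * d)).
  elim=> [|m IH]; first by rewrite mul0n addn0; exact: Leq_refl.
  apply: Leq_trans IH _.
  have e1 : Pt (i + m.+1 * d) = iter (m * d) (fun z => z ** y) (Pt j).
    by rewrite -Pt_iter; congr Pt; rewrite mulSn /d; lia.
  by rewrite e1 (Pt_iter i); apply: Leq_iter.
have hN : Leq (Pt i) (Pt i ** omega y).
  have := hd (NN T); have -> : i + NN T * d = i + (d * NN T).-1.+1.
    have := NN_gt0 T; rewrite /d; nia.
  by rewrite Pt_add omega_mult // /d; lia.
case: (ltngtP i (k - 1)) => h; last by rewrite -h.
- have -> : Pt (k - 1) = Pt i ** spow y (k - 2 - i) by rewrite -Pt_add; congr Pt; lia.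
  rewrite -mA -omega_comm mA; exact: Leq_mulr.
- lia.
Qed.

Lemma chainf i j : i < j -> i <= k - 2 -> ~ Leq (Pt i ** f) (Pt j ** f).
Proof.
move=> ij ik /(Leq_mulr y); rewrite -!mA fy -!PtS; apply: chain; lia.
Qed.

Notation OS := (Osg k).
Definition raw := option (option (nat * bool)).
Definition rawB (t : Bul OS) : raw := omap (@toraw k) (val t).
Definition validB (r : raw) : bool := if r is Some r' then rvalid k r' else true.

Lemma rawB_valid t : validB (rawB t).
Proof. by rewrite /rawB; case: (val t) => //= a; exact: toraw_valid. Qed.
Lemma rawB_inj : injective rawB.
Proof.
move=> a b e; apply: val_inj; move: e; rewrite /rawB.
case: (val a) => [x|]; case: (val b) => [z|] //= [] /toraw_inj -> //.
Qed.

Definition Pz (r : raw) (z : T * T) : Prop :=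
  [/\ Tpp T phi z.1, Tpp T phi z.2 &
  match r with
  | None => Leq z.1 g /\ Leq z.2 (Pt 2)
  | Some None => (Leq z.2 (Pt 1) /\ exists2 j, k <= j & Leq z.1 (Pt j)) \/
                 (Leq z.2 g /\ exists2 j, k - 1 <= j & Leq z.1 (Pt j ** f))
  | Some (Some (i, false)) => Leq z.1 (Pt i) /\ Leq z.2 (Pt 1)
  | Some (Some (i, true)) => Leq z.1 (Pt i ** f) /\ Leq z.2 g
  end].

Lemma Pz_L r z z' : Pz r z -> Tpp T phi z'.1 -> Tpp T phi z'.2 ->
  Leq z'.1 z.1 -> Leq z'.2 z.2 -> Pz r z'.
Proof.
move=> [_ _ H] t1 t2 l1 l2; split => //.
case: r H => [[[i [|]]|]|].
- by case=> a b; split; apply: Leq_trans; eassumption.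
- by case=> a b; split; apply: Leq_trans; eassumption.
- case=> [[a [j hj b]]|[a [j hj b]]].
  + by left; split; [apply: Leq_trans l2 a | exists j => //; apply: Leq_trans l1 b].
  + by right; split; [apply: Leq_trans l2 a | exists j => //; apply: Leq_trans l1 b].
- by case=> a b; split; apply: Leq_trans; eassumption.
Qed.

Lemma g_Pt0 : g = Pt 0.
Proof. by []. Qed.

Lemma NL01 : ~ Leq g (Pt 1).
Proof. by apply: (@chain 0 1) => //; lia. Qed.
Lemma NL02 : ~ Leq g (Pt 2).
Proof. by apply: (@chain 0 2) => //; lia. Qed.
Lemma NL12 : ~ Leq (Pt 1) (Pt 2).
Proof. by apply: (@chain 1 2) => //; lia. Qed.

Lemma LeqE (a b c : T) : Leq a b -> Leq a c -> Leq b c.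
Proof. by move=> h1 h2; apply: Leq_trans (Leq_sym h1) h2. Qed.

Lemma chain' i j : i != j -> i <= k - 1 -> j <= k - 1 -> ~ Leq (Pt i) (Pt j).
Proof.
move=> ne hi hj; case: (ltngtP i j) => h.
- exact: chain.
- by move=> /Leq_sym; apply: chain.
- by move: ne; rewrite h eqxx.
Qed.
Lemma chainf' i j : i != j -> i <= k - 2 -> j <= k - 2 -> ~ Leq (Pt i ** f) (Pt j ** f).
Proof.
move=> ne hi hj; case: (ltngtP i j) => h.
- exact: chainf.
- by move=> /Leq_sym; apply: chainf.
- by move: ne; rewrite h eqxx.
Qed.

Lemma Pz_disj r1 r2 z : validB r1 -> validB r2 -> Pz r1 z -> Pz r2 z -> r1 = r2.
Proof.
move=> v1 v2 [_ _ H1] [_ _ H2].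
case: r1 v1 H1 => [[[i [|]]|]|]; case: r2 v2 H2 => [[[i' [|]]|]|] //=;
  rewrite ?okvE => v2 H2 v1 H1.
- case: H1 => a1 b1; case: H2 => a2 b2.
  have [->//|ne] := eqVneq i i'.
  by exfalso; apply: (chainf' ne _ _ (LeqE a1 a2)); lia.
- by case: H1 => a1 b1; case: H2 => a2 b2; exfalso; apply: NL01; apply: LeqE b1 b2.
- case: H1 => a1 b1; case: H2 => [[a [j hj b]]|[a [j hj b]]]; exfalso.
  + by apply: NL01; apply: LeqE b1 a.
  + by apply: (@chainf i j _ _ (LeqE a1 b)); lia.
- by case: H1 => a1 b1; case: H2 => a2 b2; exfalso; apply: NL02; apply: LeqE b1 b2.
- by case: H1 => a1 b1; case: H2 => a2 b2; exfalso; apply: NL01; apply: LeqE b2 b1.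
- case: H1 => a1 b1; case: H2 => a2 b2.
  have [->//|ne] := eqVneq i i'.
  by exfalso; apply: (chain' ne _ _ (LeqE a1 a2)); lia.
- case: H1 => a1 b1; case: H2 => [[a [j hj b]]|[a [j hj b]]]; exfalso.
  + by apply: (@chain i j _ _ (LeqE a1 b)); lia.
  + by apply: NL01; apply: LeqE a b1.
- by case: H1 => a1 b1; case: H2 => a2 b2; exfalso; apply: NL12; apply: LeqE b1 b2.
- case: H2 => a2 b2; case: H1 => [[a [j hj b]]|[a [j hj b]]]; exfalso.
  + by apply: NL01; apply: LeqE b2 a.
  + by apply: (@chainf i' j _ _ (LeqE a2 b)); lia.
- case: H2 => a2 b2; case: H1 => [[a [j hj b]]|[a [j hj b]]]; exfalso.
  + by apply: (@chain i' j _ _ (LeqE a2 b)); lia.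
  + by apply: NL01; apply: LeqE a b2.
- case: H2 => a2 b2; case: H1 => [[a [j hj b]]|[a [j hj b]]]; exfalso.
  + by apply: NL12; apply: LeqE a b2.
  + by apply: NL02; apply: LeqE a b2.
- by case: H1 => a1 b1; case: H2 => a2 b2; exfalso; apply: NL02; apply: LeqE b2 b1.
- by case: H1 => a1 b1; case: H2 => a2 b2; exfalso; apply: NL12; apply: LeqE b2 b1.
- case: H1 => a1 b1; case: H2 => [[a [j hj b]]|[a [j hj b]]]; exfalso.
  + by apply: NL12; apply: LeqE a b1.
  + by apply: NL02; apply: LeqE a b1.
Qed.


Definition rep (r : raw) : T * T :=
  match r with
  | None => (g, Pt 2)
  | Some None => (Pt k, Pt 1)
  | Some (Some (i, false)) => (Pt i, Pt 1)
  | Some (Some (i, true)) => (Pt i ** f, g)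
  end.

Lemma Sel_rep r : SelK T phi (rep r).1 /\ SelK T phi (rep r).2.
Proof.
case: r => [[[i [|]]|]|] /=; split;
  solve [exact: Sel_g | exact: Sel_gy | exact: (Sel_Pt 2) | exact: Sel_Pt | exact: Sel_Ptf].
Qed.

Lemma Pz_rep r : Pz r (rep r).
Proof.
have [[h1 _] [h2 _]] := Sel_rep r.
split => //; case: r h1 h2 => [[[i [|]]|]|] /= h1 h2; try (split; exact: Leq_refl).
by left; split; [exact: Leq_refl | exists k => //; exact: Leq_refl].
Qed.

Notation PT := (Defs.fprod T T).

Definition GoodF (F : Obar k) (s : PT) : Prop :=
  forall t z, Pz (rawB t) z -> Pz (rawB (val F t)) (fmul PT z s).

Definition Spec (s : PT) : Prop :=
  [/\ Tpp T phi s.1, Tpp T phi s.2 & exists F, GoodF F s].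

Lemma GoodF_uniq F F' s : GoodF F s -> GoodF F' s -> F = F'.
Proof.
move=> H H'; apply: val_inj; apply/ffunP => t.
have h1 := H t _ (Pz_rep (rawB t)); have h2 := H' t _ (Pz_rep (rawB t)).
apply: rawB_inj; exact: Pz_disj (rawB_valid _) (rawB_valid _) h1 h2.
Qed.

Lemma GoodF_mul F F' s s' : GoodF F s -> GoodF F' s' -> GoodF (F ** F') (fmul PT s s').
Proof.
move=> H H' t z hz.
have -> : val (F ** F') t = val F' (val F t) by rewrite /= ffunE.
by rewrite (fmulA (f := PT)); apply: H'; apply: H.
Qed.

Lemma rawB_rho (s : OS) t : rawB (val (rhoB s) t) =
  Some (if rawB t is Some r then rmul k r (toraw s) else toraw s).
Proof.
rewrite /rawB rhoB_val /=; case: (val t) => //= a.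
by rewrite toraw_mul.
Qed.
Lemma rawB_cst t t' : rawB (val (cstB t) t') = rawB t.
Proof. by rewrite cstB_val. Qed.

Definition ehat : PT := (f, g).
Definition xhat : PT := (y, g ** y).
Definition chat (t : Bul OS) : PT := rep (rawB t).

Lemma Leq_ff (a b : T) : Leq a (b ** f) -> Leq (a ** f) (b ** f).
Proof. by move=> h; have := Leq_mulr f h; rewrite -mA f_idem. Qed.
Lemma Leq_fy (a b : T) : Leq a (b ** f) -> Leq (a ** y) (b ** y).
Proof. by move=> h; have := Leq_mulr y h; rewrite -mA fy. Qed.

Lemma Good_e : GoodF (rhoB (eO k)) ehat.
Proof.
move=> t z; rewrite rawB_rho toraw_eO //.
have v := rawB_valid t.
case: (rawB t) v => [[[i [|]]|]|] /= v [t1 t2 H].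
all: have t1' : Tpp T phi (z.1 ** f) by apply: Tpp_mul => //; exact: Tpp_f.
all: have t2' : Tpp T phi (z.2 ** g) by apply: Tpp_mul => //; exact: Sel_g.1.
all: have L2 : Leq (z.2 ** g) g by exact: (Leq_K Sel_g t2).
- rewrite addn0 v; split => //=; case: H => a b; split => //; exact: Leq_ff.
- rewrite addn0; case: ifP => hv; split => //=; case: H => a b.
  + by split => //; apply: Leq_mulr.
  + right; split => //; exists i; last by apply: Leq_mulr.
    by move: v hv; rewrite !okvE; lia.
- split => //=; right; split => //.
  case: H => [[a [j hj b]]|[a [j hj b]]].
  + by exists j; [lia | apply: Leq_mulr].
  + by exists j => //; apply: Leq_ff.
- split => //=; split => //; case: H => a b; exact: Leq_mulr.
Qed.

Lemma Good_x : GoodF (rhoB (xO k)) xhat.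
Proof.
move=> t z; rewrite rawB_rho toraw_xO //.
have v := rawB_valid t.
case: (rawB t) v => [[[i [|]]|]|] /= v [t1 t2 H].
all: have t1' : Tpp T phi (z.1 ** y) by apply: Tpp_mul => //; exact: Tpp_y.
all: have t2' : Tpp T phi (z.2 ** (g ** y)) by apply: Tpp_mul => //; exact: Sel_gy.1.
all: have L2 : Leq (z.2 ** (g ** y)) (g ** y) by exact: (Leq_K Sel_gy t2).
- have -> : okv k (i + 1, false) by move: v; rewrite !okvE; lia.
  split => //=; case: H => a b; split => //; rewrite addn1; exact: Leq_fy.
- case: ifP => hv; split => //=; case: H => a b.
  + by split => //; rewrite addn1; apply: Leq_mulr.
  + left; split => //; exists i.+1; last by apply: Leq_mulr.
    by move: v hv; rewrite !okvE; lia.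
- split => //=; left; split => //.
  case: H => [[a [j hj b]]|[a [j hj b]]].
  + by exists j.+1; [lia | apply: Leq_mulr].
  + by exists j.+1; [lia | apply: Leq_fy].
- split => //=; split => //; case: H => a b; exact: Leq_mulr.
Qed.

Lemma Good_c t : GoodF (cstB t) (chat t).
Proof.
move=> t' z hz; rewrite rawB_cst.
have [s1 s2] := Sel_rep (rawB t).
case: hz => t1 t2 _.
apply: (Pz_L (Pz_rep (rawB t))).
- by apply: Tpp_mul => //; case: s1.
- by apply: Tpp_mul => //; case: s2.
- exact: (Leq_K s1 t1).
- exact: (Leq_K s2 t2).
Qed.


Lemma Spec_mul s s' : Spec s -> Spec s' -> Spec (fmul PT s s').
Proof.
move=> [a b [F hF]] [a' b' [F' hF']]; split.
- exact: Tpp_mul.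
- exact: Tpp_mul.
- exists (F ** F'); exact: GoodF_mul.
Qed.

Definition Ucar : finType := {s : PT | pb (Spec s)}.

Lemma Spec_val (u : Ucar) : Spec (val u).
Proof. exact: (pbP _ (valP u)). Qed.

Definition Umul (a b : Ucar) : Ucar :=
  Sub (fmul PT (val a) (val b)) (introT (pbP _) (Spec_mul (Spec_val a) (Spec_val b))).

Lemma UmulA : associative Umul.
Proof. by move=> a b c; apply: val_inj; exact: (fmulA (f := PT)). Qed.

Lemma Spec_ehat : Spec ehat.
Proof.
split; [exact: Tpp_f | exact: Sel_g.1 | by exists (rhoB (eO k)); exact: Good_e].
Qed.

Lemma U_ne : 0 < #|Ucar|.
Proof. apply/card_gt0P; by exists (Sub ehat (introT (pbP _) Spec_ehat)). Qed.

Definition U : fsg := FSG UmulA U_ne.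

Lemma spec_ex (u : U) : exists F, GoodF F (val u).
Proof. by case: (Spec_val u). Qed.

Definition psi (u : U) : Obar k := proj1_sig (constructive_indefinite_description _ (spec_ex u)).
Lemma psiP u : GoodF (psi u) (val u).
Proof. rewrite /psi; by case: constructive_indefinite_description. Qed.

Lemma psi_hom : is_hom psi.
Proof.
move=> a b; apply: (GoodF_uniq (psiP _)).
exact: (GoodF_mul (psiP a) (psiP b)).
Qed.

Lemma val_hom : is_hom (fun u : U => (val u : PT)).
Proof. by []. Qed.

Definition mkU s (H : Spec s) : U := Sub s (introT (pbP _) H).
Lemma psi_mkU s H F : GoodF F s -> psi (@mkU s H) = F.
Proof. move=> hF; apply: (GoodF_uniq (psiP _)); exact: hF. Qed.

Definition Im (F : Obar k) := exists u, psi u = F.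
Lemma Im_mul F F' : Im F -> Im F' -> Im (F ** F').
Proof. by move=> [u <-] [u' <-]; exists (fmul U u u'); rewrite psi_hom. Qed.

Lemma Im_e : Im (rhoB (eO k)).
Proof. exists (mkU Spec_ehat); apply: psi_mkU; exact: Good_e. Qed.
Lemma Im_x : Im (rhoB (xO k)).
Proof.
have H : Spec xhat.
  split; [exact: Tpp_y | exact: Sel_gy.1 | by exists (rhoB (xO k)); exact: Good_x].
exists (mkU H); apply: psi_mkU; exact: Good_x.
Qed.
Lemma Im_c t : Im (cstB t).
Proof.
have [s1 s2] := Sel_rep (rawB t).
have H : Spec (chat t).
  split; [exact: s1.1 | exact: s2.1 | by exists (cstB t); exact: Good_c].
exists (mkU H); apply: psi_mkU; exact: Good_c.
Qed.

Lemma Im_xpow i : 0 < i -> Im (rhoB (xpow k i)).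
Proof.
elim: i => [|i IH] // _.
case: i IH => [|i] IH; first by rewrite xpow1 //; exact: Im_x.
rewrite -xpow_S // -rhoB_mul; apply: Im_mul; [exact: IH | exact: Im_x].
Qed.

Lemma psi_surj : forall F, exists u, psi u = F.
Proof.
move=> F; case: (Obar_cases F) => [[s ->]|[t ->]]; last exact: Im_c.
have vs := toraw_valid s.
case es: (toraw s) vs => [[i b]|] /= vs.
- case: b es vs => es vs.
  + case: i es vs => [|i] es vs.
    * have -> : s = eO k by apply: toraw_inj; rewrite es toraw_eO.
      exact: Im_e.
    * have -> : s = xpow k i.+1 ** eO k.
        apply: toraw_inj; rewrite es toraw_mul toraw_xpow toraw_eO //.
        have -> : okv k (i.+1, false) by move: vs; rewrite !okvE; lia.
        by rewrite /= addn0 vs.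
      rewrite -rhoB_mul; apply: Im_mul; [exact: Im_xpow | exact: Im_e].
  + have -> : s = xpow k i.
      by apply: toraw_inj; rewrite es toraw_xpow vs.
    apply: Im_xpow; move: vs; rewrite okvE; lia.
- have -> : s = xpow k k.
    apply: toraw_inj; rewrite es toraw_xpow.
    by have -> : okv k (k, false) = false by rewrite okvE; lia.
  apply: Im_xpow; lia.
Qed.

Lemma D_main : pv_of T (Obar k).
Proof.
move=> V pV H; have VT := H T erefl.
case: pV => _ Hprod Hsub Hquot.
have VPT : V PT := Hprod T T VT VT.
have VU : V U := Hsub PT U _ val_hom val_inj VPT.
exact: (Hquot U (Obar k) psi psi_hom psi_surj VU).
Qed.

End D.

Lemma D_gen k T : 2 <= k -> ~ GoodK k T -> pv_of T (Obar k).
Proof.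
move=> k2 nG.
have [phi [E [hE hf]]] : exists phi E, SelK T phi E /\ LHSk k phi E <> RHSk k phi E.
  apply: NNPP => H; apply: nG => phi E hE; apply: NNPP => hf.
  by apply: H; exists phi, E.
exact: (D_main k2 hE hf).
Qed.

Lemma Obar_notGood k : 2 <= k -> ~ GoodK k (Obar k).
Proof.
move=> k2 H.
have [E hE] := witness (phi0 k).
exact: (Obar_fails k2 (H _ _ hE)).
Qed.

Theorem theorem4p18 :
  (forall k : nat, 2 <= k ->
     join_irreducible (pv_of (Obar k)) /\
     (forall e : impl, impl_mul e e = e -> in_minimal_ideal e ->
        forall T : fsg, Excl (Obar k) T <-> sat_pid k e T)) /\
  (forall k l : nat, 2 <= k -> 2 <= l -> k <> l ->
     ~ (forall T : fsg, pv_of (Obar k) T <-> pv_of (Obar l) T)).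
Proof.
split.
- move=> k k2; split.
  + apply: (JI_crit (GoodK_pv k) (Obar_notGood k2)) => T nG.
    exact: D_gen.
  + move=> e _ hmin T; split.
    * move=> hex; apply/sat_SelE => phi E ->; apply: NNPP => hf.
      apply: hex; apply: (D_gen k2) => G; apply: hf.
      exact: (G phi _ (@minideal_K e T phi hmin)).
    * move=> /sat_SelE hs hp.
      have := pv_of_sub (satE_pv k e) hs hp.
      move=> H; apply: (Obar_fails k2 (E := iop e _ (phi0 k))).
      exact: H.
- have key : forall k l, 2 <= k -> k < l ->
      ~ (forall T : fsg, pv_of (Obar k) T <-> pv_of (Obar l) T).
    move=> k l k2 kl H.
    have := (H (Obar l)).2 (@pv_of_self (Obar l)).
    move/(pv_of_sub (Vk_pv k) (Obar_Vk k2)).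
    exact: Obar_notVk.
  move=> k l k2 l2 kl H; case: (ltngtP k l) => h.
  + exact: (key k l).
  + by apply: (key l k) => // T; split => /H.
  + by apply: kl.
Qed.
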